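(* Let $A,B$ be nilpotent $n\times n$ complex matrices in Jordan normal form, and let $\xi>0$. If there exists an invertible matrix $C$ with $\|C\|,\|C^{-1}\|\le\xi$ such that $\|AC-CB\|=\varepsilon<\frac{1}{n\cdot n!\,\xi^n}$, then $A$ and $B$ have the same Jordan structure, i.e. for every $k\ge1$ they have the same number of Jordan blocks of dimension $k$.
   Context: $\|\cdot\|$ denotes the operator norm on $n\times n$ matrices. *)

(* Defs.v *)
From HB Require Import structures.
From mathcomp Require Import all_boot all_order all_algebra.
From mathcomp Require Import complex.
From mathcomp Require Import boolp classical_sets reals.
Set Implicit Arguments. Unset Strict Implicit. Unset Printing Implicit Defensive.
Import Order.TTheory GRing.Theory Num.Theory.
Local Open Scope ring_scope.

Definition vnorm (R : realType) (n : nat) (x : 'cV[R[i]]_n) : R :=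
  Num.sqrt (\sum_(i < n) ((@complex.Re R (x i 0)) ^+ 2 + (@complex.Im R (x i 0)) ^+ 2)).

Definition opnorm (R : realType) (n : nat) (M : 'M[R[i]]_n) : R :=
  reals.sup [set r : R | exists x : 'cV[R[i]]_n, vnorm x <= 1 /\ r = vnorm (M *m x)]%classic.

Definition block_starts (s : seq nat) : seq nat :=
  [seq sumn (take k s) | k <- iota 0 (size s)].

(* The nilpotent Jordan matrix with Jordan blocks J_{s_1}(0), ..., J_{s_m}(0)
   placed along the diagonal in this order: entry (i, i+1) equals 1 exactly
   when i and i+1 lie in the same block; all other entries are 0. *)
Definition jordan_nil (R : realType) (n : nat) (s : seq nat) : 'M[R[i]]_n :=
  \matrix_(i < n, j < n)
    (if ((j : nat) == i.+1) && (i.+1 \notin block_starts s) then 1 else 0).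

Definition nil_jordan_form (R : realType) (n : nat) (A : 'M[R[i]]_n)
    (s : seq nat) : Prop :=
  [/\ all (fun k => 0 < k)%N s, sumn s = n & A = jordan_nil R n s].

(* Main.v *)
Require Import Defs.
From HB Require Import structures.
From mathcomp Require Import all_boot all_order all_algebra.
From mathcomp Require Import complex.
From mathcomp Require Import boolp classical_sets reals.
From mathcomp Require Import ring lra zify.
Set Implicit Arguments. Unset Strict Implicit. Unset Printing Implicit Defensive.
Import Order.TTheory GRing.Theory Num.Theory.
Local Open Scope ring_scope.

Section VN.
Variable R : realType.
Local Notation C := (R[i]).

Definition sqn (z : C) : R := complex.Re z ^+ 2 + complex.Im z ^+ 2.
Definition sqv n (x : 'cV[C]_n) : R := \sum_(i < n) sqn (x i 0).

Lemma ReD (u v : C) : complex.Re (u + v) = complex.Re u + complex.Re v.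
Proof. by case: u; case: v. Qed.
Lemma ImD (u v : C) : complex.Im (u + v) = complex.Im u + complex.Im v.
Proof. by case: u; case: v. Qed.
Lemma ReN (u : C) : complex.Re (- u) = - complex.Re u.
Proof. by case: u. Qed.
Lemma ImN (u : C) : complex.Im (- u) = - complex.Im u.
Proof. by case: u. Qed.
Lemma ReM (u v : C) : complex.Re (u * v) = complex.Re u * complex.Re v - complex.Im u * complex.Im v.
Proof. by case: u; case: v. Qed.
Lemma ImM (u v : C) : complex.Im (u * v) = complex.Re u * complex.Im v + complex.Im u * complex.Re v.
Proof. by case: u; case: v. Qed.
Lemma Re0 : complex.Re (0 : C) = 0. Proof. by []. Qed.
Lemma Im0 : complex.Im (0 : C) = 0. Proof. by []. Qed.

Lemma sqn_ge0 z : 0 <= sqn z.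
Proof. by rewrite /sqn addr_ge0 // sqr_ge0. Qed.
Lemma sqnM u v : sqn (u * v) = sqn u * sqn v.
Proof. rewrite /sqn ReM ImM; ring. Qed.
Lemma sqnN u : sqn (- u) = sqn u.
Proof. rewrite /sqn ReN ImN; ring. Qed.
Lemma sqn_eq0 u : (sqn u == 0) = (u == 0).
Proof.
case: u => a b; rewrite /sqn /= paddr_eq0 ?sqr_ge0 // !sqrf_eq0.
apply/idP/idP => [/andP[/eqP-> /eqP->] //|/eqP[-> ->]]; by rewrite !eqxx.
Qed.

Lemma sqv_ge0 n (x : 'cV[C]_n) : 0 <= sqv x.
Proof. by rewrite /sqv sumr_ge0 // => i _; apply: sqn_ge0. Qed.

Lemma quad_disc (A B Cc : R) : 0 <= A -> (forall t, 0 <= t ^+ 2 * A + 2 * t * B + Cc) ->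
  B ^+ 2 <= A * Cc.
Proof.
move=> A0 h; have C0 := h 0.
case: (ltrgtP A 0) => [|Ap|A0'].
- by rewrite ltNge A0.
- have := h (- B / A); set t := - B / A => ht.
  have htA : t * A = - B by rewrite /t divfK // gt_eqF.
  nra.
- rewrite A0' mul0r; case: (eqVneq B 0) => [->|Bn]; first by rewrite expr2 mulr0.
  have := h (- (Cc + 1) / (2 * B)); rewrite A0' mulr0 add0r.
  set t := - (Cc + 1) / (2 * B).
  have -> : 2 * t * B = - (Cc + 1) by rewrite /t; field; rewrite Bn.
  lra.
Qed.

Definition dotv n (x y : 'cV[C]_n) : R :=
  \sum_(i < n) (complex.Re (x i 0) * complex.Re (y i 0) + complex.Im (x i 0) * complex.Im (y i 0)).

Lemma cauchy n (x y : 'cV[C]_n) : dotv x y ^+ 2 <= sqv x * sqv y.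
Proof.
apply: quad_disc; first exact: sqv_ge0.
move=> t.
have -> : t ^+ 2 * sqv x + 2 * t * dotv x y + sqv y =
   \sum_(i < n) ((t * complex.Re (x i 0) + complex.Re (y i 0)) ^+ 2 +
                 (t * complex.Im (x i 0) + complex.Im (y i 0)) ^+ 2).
  rewrite /sqv /dotv !mulr_sumr -!big_split /=; apply: eq_bigr => i _; rewrite /sqn; ring.
by apply: sumr_ge0 => i _; rewrite addr_ge0 // sqr_ge0.
Qed.

Lemma sqvD n (x y : 'cV[C]_n) : sqv (x + y) = sqv x + sqv y + 2 * dotv x y.
Proof.
rewrite /sqv /dotv mulr_sumr -!big_split /=; apply: eq_bigr => i _.
rewrite mxE /sqn ReD ImD; ring.
Qed.

Lemma vnormE n (x : 'cV[C]_n) : vnorm x = Num.sqrt (sqv x).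
Proof. by []. Qed.

Lemma vnorm_ge0 n (x : 'cV[C]_n) : 0 <= vnorm x.
Proof. exact: sqrtr_ge0. Qed.

Lemma vnormD n (x y : 'cV[C]_n) : vnorm (x + y) <= vnorm x + vnorm y.
Proof.
rewrite !vnormE -(ler_pXn2r (_ : 0 < 2)%N) ?nnegrE ?addr_ge0 ?sqrtr_ge0 //.
rewrite sqr_sqrtr ?sqv_ge0 // sqrrD !sqr_sqrtr ?sqv_ge0 // sqvD.
have key : dotv x y <= Num.sqrt (sqv x) * Num.sqrt (sqv y).
  rewrite -sqrtrM ?sqv_ge0 //; apply: le_trans (ler_norm _) _.
  by rewrite -sqrtr_sqr ler_sqrt ?mulr_ge0 ?sqv_ge0 ?cauchy.
rewrite mulr2n; lra.
Qed.

Lemma sqvN n (x : 'cV[C]_n) : sqv (- x) = sqv x.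
Proof. by apply: eq_bigr => i _; rewrite mxE sqnN. Qed.
Lemma vnormN n (x : 'cV[C]_n) : vnorm (- x) = vnorm x.
Proof. by rewrite !vnormE sqvN. Qed.
Lemma vnorm0 n : vnorm (0 : 'cV[C]_n) = 0.
Proof. rewrite vnormE /sqv big1 ?sqrtr0 // => i _; rewrite mxE /sqn Re0 Im0; ring. Qed.
Lemma vnorm_eq0 n (x : 'cV[C]_n) : vnorm x = 0 -> x = 0.
Proof.
rewrite vnormE => /eqP; rewrite sqrtr_eq0 => h.
have h0 : sqv x = 0 by apply/eqP; rewrite eq_le h sqv_ge0.
move/eqP: h0; rewrite /sqv psumr_eq0 => [/allP hx|i _]; last exact: sqn_ge0.
apply/matrixP => i j; rewrite (ord1 j) mxE; apply/eqP; rewrite -sqn_eq0.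
exact: hx (mem_index_enum i).
Qed.
Lemma vnormZ n (c : C) (x : 'cV[C]_n) : vnorm (c *: x) = Num.sqrt (sqn c) * vnorm x.
Proof.
rewrite !vnormE -sqrtrM ?sqn_ge0 // /sqv mulr_sumr; congr Num.sqrt.
by apply: eq_bigr => i _; rewrite mxE sqnM.
Qed.
Lemma vnorm_sum n (I : finType) (F : I -> 'cV[C]_n) : vnorm (\sum_i F i) <= \sum_i vnorm (F i).
Proof.
apply: (big_ind2 (fun x y => vnorm x <= y)); first by rewrite vnorm0.
  by move=> x1 y1 x2 y2 h1 h2; apply: le_trans (vnormD _ _) (lerD h1 h2).
by [].
Qed.
Lemma sqn_le_sqv n (x : 'cV[C]_n) i : sqn (x i 0) <= sqv x.
Proof.
rewrite /sqv (bigD1 i) //= lerDl; apply: sumr_ge0 => j _; exact: sqn_ge0.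
Qed.
Lemma sqnC (r : R) : sqn ((r%:C)%C) = r ^+ 2.
Proof. by rewrite /sqn /=; ring. Qed.

Lemma mulmx_sum_col' n (M : 'M[C]_n) (x : 'cV[C]_n) : M *m x = \sum_j x j 0 *: col j M.
Proof.
apply/matrixP => i k; rewrite !mxE summxE; apply: eq_bigr => j _.
by rewrite !mxE (ord1 k) mulrC.
Qed.

Lemma opnorm_bound n (M : 'M[C]_n) : has_sup [set r : R | exists x : 'cV[C]_n, vnorm x <= 1 /\ r = vnorm (M *m x)]%classic.
Proof.
split; first by exists (vnorm (M *m 0)), 0; rewrite vnorm0.
exists (\sum_j vnorm (col j M)) => r [x [hx ->]].
rewrite mulmx_sum_col'; apply: le_trans (vnorm_sum _) _.
apply: ler_sum => j _; rewrite vnormZ; apply: ler_piMl; first exact: vnorm_ge0.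
apply: le_trans hx; by rewrite vnormE ler_sqrt ?sqv_ge0 ?sqn_le_sqv.
Qed.

Lemma opnormP n (M : 'M[C]_n) (x : 'cV[C]_n) : vnorm (M *m x) <= opnorm M * vnorm x.
Proof.
have [/vnorm_eq0 ->|xn] := eqVneq (vnorm x) 0.
  by rewrite mulmx0 vnorm0 mulr0.
have xp : 0 < vnorm x by rewrite lt_def xn vnorm_ge0.
set c := (vnorm x)^-1.
have h : vnorm (M *m (((c%:C)%C) *: x)) <= opnorm M.
  apply: sup_upper_bound; first exact: opnorm_bound.
  exists (((c%:C)%C) *: x); split => //.
  by rewrite vnormZ sqnC sqrtr_sqr ger0_norm ?invr_ge0 ?vnorm_ge0 // mulVf.
move: h; rewrite -scalemxAr vnormZ sqnC sqrtr_sqr ger0_norm ?invr_ge0 ?vnorm_ge0 //.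
by rewrite /c mulrC ler_pdivrMr.
Qed.
End VN.
Section RK.
Variable F : fieldType.

Lemma rank_diag01 n (d : pred 'I_n) :
  \rank (\matrix_(i, j) (if (i == j) && d j then 1 else 0) : 'M[F]_n) = #|d|.
Proof.
set D := \matrix_(i, j) _.
have rowD i : row i D = if d i then delta_mx 0 i else 0.
  apply/matrixP => a b; rewrite (ord1 a); case di: (d i); rewrite !mxE ?eqxx /=;
  case: (eqVneq i b) => [<-|ne] //=; rewrite ?di ?eqxx // eq_sym (negbTE ne).
have E : (D == \sum_(i | d i) <<delta_mx 0 i : 'rV[F]_n>>)%MS.
  apply/andP; split.
    apply/row_subP => i; rewrite rowD; case: ifP => di; last exact: sub0mx.
    apply: (sumsmx_sup i) => //; by rewrite genmxE.
  apply/sumsmx_subP => i di; rewrite genmxE -[delta_mx 0 i]/(if true then delta_mx 0 i else 0).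
  by rewrite -di -rowD row_sub.
rewrite (eqmx_rank E).
have /mxdirectP -> := @mxdirect_delta F _ d n id (in2W (@inj_id _)).
rewrite /= -sum1_card; apply: eq_bigr => i _; by rewrite mxrank_gen mxrank_delta.
Qed.

Lemma rank_colker n (X Y : 'M[F]_n) : (forall z : 'cV[F]_n, X *m z = 0 -> Y *m z = 0) ->
  (\rank Y <= \rank X)%N.
Proof.
move=> h.
have S : (kermx X^T <= kermx Y^T)%MS.
  apply/row_subP => i; apply/sub_kermxP.
  have h0 : row i (kermx X^T) *m X^T = 0 by rewrite -row_mul mulmx_ker row0.
  have : X *m (row i (kermx X^T))^T = 0 by rewrite -(trmxK (X *m _)) trmx_mul trmxK h0 trmx0.
  by move/h => h1; rewrite -(trmxK (row _ _ *m _)) trmx_mul trmxK h1 trmx0.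
have := mxrankS S; rewrite !mxrank_ker !mxrank_tr.
have := rank_leq_row X; have := rank_leq_row Y. lia.
Qed.
End RK.
Definition lkf (s : seq nat) (m : nat) : bool := m \notin block_starts s.
Definition dk (lk : nat -> bool) (k j : nat) : bool := (k <= j)%N && all lk (iota (j - k).+1 k).
Definition Gs (s : seq nat) (k : nat) : nat := sumn [seq (b - k)%N | b <- s].

Lemma bs_cons x s : block_starts (x :: s) = 0%N :: map (addn x) (block_starts s).
Proof.
rewrite /block_starts /= -map_comp; congr (_ :: _).
rewrite (iotaDl 1 0) -map_comp; apply: eq_map => k /=; by [].
Qed.

Lemma count_ge k x : count (fun j => k <= j)%N (iota 0 x) = (x - k)%N.
Proof.
elim: x => [|x IH] //; rewrite -addn1 iotaD count_cat IH /= add0n addn0.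
case: (leqP k x) => h; lia.
Qed.

Lemma count_dk s k : count (dk (lkf s) k) (iota 0 (sumn s)) = Gs s k.
Proof.
elim: s => [|x s IH] //=.
rewrite iotaD.
have -> : iota (0 + x) (sumn s) = map (addn x) (iota 0 (sumn s)) by rewrite -(iotaDl x 0) addn0.
rewrite count_cat count_map /Gs /= -/(Gs s k) -IH.
congr addn.
  rewrite -count_ge; apply: eq_in_count => j; rewrite mem_iota add0n => /andP[_ jx].
  rewrite /dk; case: (leqP k j) => //= kj; apply/allP => m; rewrite mem_iota => /andP[h1 h2].
  rewrite /lkf bs_cons inE negb_or; apply/andP; split; first by apply/eqP; lia.
  by apply/mapP => [[y _ ey]]; lia.
case: s IH => [|b s] IH; first by [].
apply: eq_in_count => j; rewrite mem_iota add0n => /andP[_ jN] /=.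
rewrite /dk; case: (leqP k j) => kj /=.
  rewrite (_ : k <= x + j)%N; last by lia.
  rewrite (_ : (x + j - k).+1 = x + (j - k).+1)%N; last by lia.
  rewrite (iotaDl x) all_map; apply: eq_in_all => m; rewrite mem_iota => /andP[h1 h2] /=.
  rewrite /lkf bs_cons inE negb_or (mem_map (@addnI x)).
  by rewrite (_ : (x + m == 0)%N = false) //; apply/negbTE; lia.
case: (leqP k (x + j)) => //= h; apply/negbTE/allPn; exists x.
  by rewrite mem_iota; apply/andP; split; lia.
rewrite /lkf negbK bs_cons inE; apply/orP; right; apply/mapP; exists 0%N; last by rewrite addn0.
by rewrite bs_cons inE eqxx.
Qed.

Lemma count_from_G s k : (0 < k)%N ->
  (Gs s k.-1 + Gs s k.+1 = 2 * Gs s k + count_mem k s)%N.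
Proof.
move=> k0; elim: s => [|b s IH] //=; rewrite /Gs /= -!/(Gs s _).
case: (eqVneq b k) => [->|ne] /=; rewrite ?eqxx ?(negbTE ne) /=.
all: move: IH; set g1 := Gs s k.-1; set g2 := Gs s k.+1; set g0 := Gs s k; set c := count _ s; move=> IH.
all: try move/eqP: ne => ne; lia.
Qed.

Section JM.
Variable R : realType.
Local Notation C := (R[i]).
Variable N : nat.
Variable lk : nat -> bool.
Local Notation n := N.+1.

Definition Pk k : 'M[C]_n :=
  \matrix_(i, j) (if ((j : nat) == i + k)%N && all lk (iota i.+1 k) then 1 else 0).
Definition Dk k : 'M[C]_n :=
  \matrix_(i, j) (if (i == j) && dk lk k j then 1 else 0).

Lemma Pk_mulvec k (x : 'cV[C]_n) (i : 'I_n) :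
  (Pk k *m x) i 0 = if (i + k < n)%N && all lk (iota i.+1 k) then x (inord (i + k)) 0 else 0.
Proof.
rewrite mxE; case: (ltnP (i + k) n) => h /=.
  rewrite (bigD1 (Ordinal h)) //= big1 => [|l hl].
    rewrite mxE /= eqxx /=; case: (all _ _); rewrite ?mul1r ?mul0r ?addr0 //.
    by congr (x _ 0); apply: val_inj; rewrite /= inordK.
  rewrite mxE; case: eqP => [e|]; last by rewrite mul0r.
  by exfalso; move/eqP: hl; apply; apply: val_inj.
rewrite big1 // => l _; rewrite mxE; case: eqP => [e|]; last by rewrite mul0r.
by have := ltn_ord l; lia.
Qed.

Lemma Pk0 : Pk 0 = 1.
Proof.
apply/matrixP => i j; rewrite !mxE addn0 /=.
case: (eqVneq i j) => [->|ne]; first by rewrite eqxx.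
by rewrite andbT; case: eqP => // /val_inj e; move: ne; rewrite e eqxx.
Qed.

Lemma PkS k : Pk k * Pk 1 = Pk k.+1.
Proof.
apply/matrixP => i j; rewrite -mulmxE mxE [RHS]mxE.
rewrite (_ : iota i.+1 k.+1 = iota i.+1 k ++ [:: i.+1 + k]%N); last by rewrite -(addn1 k) iotaD.
case: (ltnP (i + k) n) => h /=.
  rewrite (bigD1 (Ordinal h)) //= big1 => [|l hl].
    rewrite !mxE /= eqxx /= addr0 all_cat /= andbT.
    rewrite (_ : (i + k + 1) = i + k.+1)%N; last by lia.
    rewrite (_ : (i + k).+1 = i + k.+1)%N; last by lia.
    by case: (all lk _); case: (lk _); case: (_ == _); rewrite ?mul1r ?mul0r.
  rewrite mxE; case: eqP => [e|]; last by rewrite mul0r.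
  by exfalso; move/eqP: hl; apply; apply: val_inj.
rewrite big1.
  case: eqP => // e; by have := ltn_ord j; lia.
move=> l _; rewrite mxE; case: eqP => [e|]; last by rewrite mul0r.
by have := ltn_ord l; lia.
Qed.

Lemma Pk_pow k : Pk 1 ^+ k = Pk k.
Proof. elim: k => [|k IH]; first by rewrite expr0 Pk0. by rewrite exprSr IH PkS. Qed.

Lemma Pk_D k : Pk k *m Dk k = Pk k.
Proof.
apply/matrixP => i j; rewrite mxE (bigD1 j) //= big1 => [|l hl].
  rewrite addr0 !mxE eqxx /=; case: eqP => [e|]; last by rewrite !mul0r.
  case a: (all _ _); rewrite ?mul0r //= mul1r.
  by rewrite /dk e leq_addl addnK a.
by rewrite [Dk _ _ _]mxE (negbTE hl) /= mulr0.
Qed.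

Lemma Dk_mulvec k (y : 'cV[C]_n) (i : 'I_n) : (Dk k *m y) i 0 = if dk lk k i then y i 0 else 0.
Proof.
rewrite mxE (bigD1 i) //= big1 => [|l hl].
  by rewrite addr0 mxE eqxx /=; case: (dk _ _ _); rewrite ?mul1r ?mul0r.
by rewrite mxE eq_sym (negbTE hl) mul0r.
Qed.

Lemma Dk_idem k : Dk k *m Dk k = Dk k.
Proof.
apply/matrixP => i j; rewrite mxE (bigD1 i) //= big1 => [|l hl].
  rewrite addr0 !mxE eqxx /=; case: (eqVneq i j) => [<-|ne] /=.
    by case: (dk _ _ i); rewrite ?mul1r ?mul0r.
  by rewrite mulr0.
by rewrite [Dk _ i l]mxE eq_sym (negbTE hl) mul0r.
Qed.

Lemma shift_sum (F : nat -> R) M k :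
  \sum_(0 <= i < M) (if (i + k < M)%N then F (i + k) else 0) =
  \sum_(0 <= j < M) (if (k <= j)%N then F j else 0).
Proof.
case: (leqP k M) => hk.
  rewrite (big_cat_nat (leq0n (M - k)) (leq_subr k M)) /=.
  rewrite [X in _ + X = _]big_nat_cond [X in _ + X = _]big1 ?addr0; last first.
    move=> i /andP[/andP[h1 h2] _].
    have h' : (i + k < M)%N = false by apply/negbTE; move: h1 h2 hk; clear; lia.
    by rewrite h'.
  rewrite (big_cat_nat (leq0n k) hk) /= [X in _ = X + _]big_nat_cond [X in _ = X + _]big1 ?add0r; last first.
    move=> i /andP[/andP[h1 h2] _].
    have h' : (k <= i)%N = false by apply/negbTE; move: h2; clear; lia.
    by rewrite h'.
  rewrite -[in RHS](add0n k) [RHS]big_addn.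
  apply: eq_big_nat => i /andP[_ h].
  have h' : (i + k < M)%N by move: h hk; clear; lia.
  by rewrite add0n leq_addl h'.
rewrite [LHS]big_nat_cond [RHS]big_nat_cond big1 => [|i /andP[/andP[h1 h2] _]].
  rewrite big1 // => i /andP[/andP[h1 h2] _].
  have h' : (k <= i)%N = false by apply/negbTE; move: h2 hk; clear; lia.
  by rewrite h'.
have h' : (i + k < M)%N = false by apply/negbTE; move: h2 hk; clear; lia.
by rewrite h'.
Qed.

Lemma sqv_Pk k (x : 'cV[C]_n) :
  sqv (Pk k *m x) = \sum_(j < n) (if dk lk k j then sqn (x j 0) else 0).
Proof.
pose xf j := x (inord j) 0.
pose F j := if all lk (iota (j - k).+1 k) then sqn (xf j) else 0.
transitivity (\sum_(i < n) (if (i + k < n)%N then F (i + k)%N else 0)).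
  apply: eq_bigr => i _; rewrite Pk_mulvec /F addnK.
  case: (i + k < n)%N; case: (all _ _) => //=; rewrite /sqn; ring.
transitivity (\sum_(j < n) (if (k <= j)%N then F j else 0)).
  by rewrite -(big_mkord xpredT (fun i => if (i + k < n)%N then F (i + k)%N else 0)) -(big_mkord xpredT (fun j => if (k <= j)%N then F j else 0)) shift_sum.
apply: eq_bigr => j _; rewrite /dk /F; case: (k <= j)%N => //=.
by rewrite /xf inord_val.
Qed.

Lemma Pk_contr k (x : 'cV[C]_n) : vnorm (Pk k *m x) <= vnorm x.
Proof.
rewrite !vnormE ler_sqrt ?sqv_ge0 // sqv_Pk; apply: ler_sum => j _.
by case: (dk _ _ _) => //; apply: sqn_ge0.
Qed.

Lemma Pk_iso k (y : 'cV[C]_n) : Dk k *m y = y -> vnorm (Pk k *m y) = vnorm y.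
Proof.
move=> hy; rewrite !vnormE sqv_Pk; congr Num.sqrt; apply: eq_bigr => j _.
case dj: (dk _ _ _) => //.
by rewrite -hy Dk_mulvec dj /sqn Re0 Im0; ring.
Qed.

Lemma rank_Dk k : \rank (Dk k) = count (dk lk k) (iota 0 n).
Proof.
rewrite rank_diag01 -sum1_card -sum1_count.
rewrite -(big_mkord (fun j => dk lk k j) (fun _ => 1%N)) /index_iota subn0.
by [].
Qed.

Lemma rank_Pk k : (\rank (Pk k) <= \rank (Dk k))%N.
Proof. by rewrite -{1}Pk_D mxrankM_maxr. Qed.

End JM.

Section Main.
Variable R : realType.
Local Notation C := (R[i]).

Lemma opnorm_ge0 n (M : 'M[C]_n) : 0 <= opnorm M.
Proof.
apply: (sup_upper_bound (opnorm_bound M)); exists 0; split; first by rewrite vnorm0.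
by rewrite mulmx0 vnorm0.
Qed.

Lemma rank_key n (P Q D : 'M[C]_n) :
  (forall y, D *m y = y -> vnorm (P *m y) = vnorm y) -> D *m D = D ->
  (forall y, y != 0 -> vnorm ((Q - P) *m y) < vnorm y) -> (\rank D <= \rank Q)%N.
Proof.
move=> hiso hDD hlt; apply: leq_trans (mxrankM_maxl Q D).
apply: rank_colker => z hz.
set y := D *m z.
have Dy : D *m y = y by rewrite /y mulmxA hDD.
have Qy : Q *m y = 0 by rewrite /y mulmxA.
case: (eqVneq y 0) => // yn.
by have := hlt y yn; rewrite mulmxBl Qy sub0r vnormN hiso // ltxx.
Qed.

Lemma lt_helper n (M : 'M[C]_n) c : (forall y, vnorm (M *m y) <= c * vnorm y) -> c < 1 ->
  forall y, y != 0 -> vnorm (M *m y) < vnorm y.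
Proof.
move=> h c1 y yn.
have yp : 0 < vnorm y.
  rewrite lt_def vnorm_ge0 andbT; apply/eqP => /vnorm_eq0 e; by rewrite e eqxx in yn.
apply: le_lt_trans (h y) _; by rewrite gtr_pMl.
Qed.

Lemma Ek_bound n (A B Cm : 'M[C]_n) eps : 0 <= eps ->
  (forall x, vnorm (A *m x) <= vnorm x) -> (forall k x, vnorm (B ^+ k *m x) <= vnorm x) ->
  (forall x, vnorm ((A *m Cm - Cm *m B) *m x) <= eps * vnorm x) ->
  forall k x, vnorm ((A ^+ k *m Cm - Cm *m B ^+ k) *m x) <= k%:R * eps * vnorm x.
Proof.
move=> e0 hA hB hE; elim => [|k IH] x.
  by rewrite !expr0 mul1mx mulmx1 subrr mul0mx vnorm0 mul0r mul0r.
have -> : A ^+ k.+1 *m Cm - Cm *m B ^+ k.+1 =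
   A *m (A ^+ k *m Cm - Cm *m B ^+ k) + (A *m Cm - Cm *m B) *m B ^+ k.
  rewrite !exprS -!mulmxE mulmxBr mulmxBl !mulmxA addrA subrK //.
rewrite mulmxDl; apply: le_trans (vnormD _ _) _.
rewrite -!mulmxA; apply: le_trans (lerD (hA _) (hE _)) _.
apply: le_trans (lerD (IH x) (ler_wpM2l e0 (hB k x))) _.
rewrite mulrSr le_eqVlt; apply/orP; left; apply/eqP; ring.
Qed.

Lemma jordanE N s : jordan_nil R N.+1 s = Pk R N (lkf s) 1.
Proof.
apply/matrixP => i j; rewrite !mxE /= addn1 andbT; by [].
Qed.

Lemma Gs_big s k : (sumn s <= k)%N -> Gs s k = 0%N.
Proof.
elim: s => [|b s IH] //= h; rewrite /Gs /= -/(Gs s k) IH; last by lia.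
by have -> : (b - k = 0)%N by lia.
Qed.



End Main.

Theorem proposition11 (R : realType) (n : nat) (A B : 'M[R[i]]_n)
    (sA sB : seq nat)
    (hA : nil_jordan_form A sA) (hB : nil_jordan_form B sB)
    (xi : R) (hxi : 0 < xi)
    (C : 'M[R[i]]_n) (hCu : C \in unitmx)
    (hC : opnorm C <= xi) (hCi : opnorm (invmx C) <= xi)
    (heps : opnorm (A *m C - C *m B) < ((n * n`!)%:R * xi ^+ n)^-1) :
  forall k : nat, (0 < k)%N -> count_mem k sA = count_mem k sB.
Proof.
move=> k k0.
case: hA => posA sumA eA; case: hB => posB sumB eB.
case: n A B C sumA sumB eA eB hCu hC hCi heps => [|N] A B Cm sumA sumB eA eB hCu hC hCi heps.
  clear eA eB heps.
  case: sA posA sumA => [|a sA] //=; last by move=> /andP[]; lia.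
  case: sB posB sumB => [|b sB] //=; by move=> /andP[]; lia.
set eps := opnorm (A *m Cm - Cm *m B).
set Ci := invmx Cm.
have e0 : 0 <= eps := opnorm_ge0 _.
have CiC : Ci *m Cm = 1%:M by rewrite mulVmx.
have CCi : Cm *m Ci = 1%:M by rewrite mulmxV.
have powA j : A ^+ j = Pk R N (lkf sA) j by rewrite eA jordanE Pk_pow.
have powB j : B ^+ j = Pk R N (lkf sB) j by rewrite eB jordanE Pk_pow.
have cA x : vnorm (A *m x) <= vnorm x by rewrite eA jordanE Pk_contr.
have cB j x : vnorm (B ^+ j *m x) <= vnorm x by rewrite powB Pk_contr.
have hE x : vnorm ((A *m Cm - Cm *m B) *m x) <= eps * vnorm x by apply: opnormP.
have EB := Ek_bound e0 cA cB hE.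
have xi1 : 1 <= xi.
  pose e : 'cV[R[i]]_N.+1 := delta_mx 0 0.
  have ep : 0 < vnorm e.
    rewrite lt_def vnorm_ge0 andbT; apply/eqP => /vnorm_eq0 /matrixP /(_ 0 0).
    by rewrite !mxE eqxx /= => /eqP; rewrite oner_eq0.
  have h1 : vnorm e <= xi * vnorm (Ci *m e).
    rewrite -{1}(mul1mx e) -CCi -mulmxA; apply: le_trans (opnormP _ _) _.
    by apply: ler_wpM2r; [exact: vnorm_ge0|].
  have h2 : vnorm (Ci *m e) <= xi * vnorm e.
    by apply: le_trans (opnormP _ _) _; apply: ler_wpM2r; [exact: vnorm_ge0|].
  have : vnorm e <= xi * xi * vnorm e.
    apply: le_trans h1 _; rewrite -mulrA; apply: ler_wpM2l => //; exact: ltW.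
  move=> h3; have h4 : 1 <= xi * xi by rewrite -(ler_pM2r ep) mul1r.
  rewrite leNgt; apply/negP => lt1.
  have := ltr_pM (ltW hxi) (ltW hxi) lt1 lt1; rewrite mul1r => h5.
  by have := le_lt_trans h4 h5; rewrite ltxx.
have small j : (j <= N.+1)%N -> xi * j%:R * eps < 1.
  move=> hj.
  set K := ((N.+1 * N.+1`!)%:R * xi ^+ N.+1).
  have Kp : 0 < K by rewrite mulr_gt0 ?exprn_gt0 // ltr0n muln_gt0 fact_gt0.
  have hK : eps * K < 1 by rewrite -ltr_pdivlMr // mul1r.
  have xp : xi <= xi ^+ N.+1 by rewrite exprS ler_peMr ?exprn_ege1 // ltW.
  have f1 : 1 <= (N.+1`!)%:R :> R by rewrite ler1n fact_gt0.
  have jn : j%:R <= N.+1%:R :> R by rewrite ler_nat.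
  have h1 : xi * j%:R <= xi ^+ N.+1 * N.+1%:R by apply: ler_pM => //; exact: ltW.
  have h2 : xi * j%:R <= K.
    apply: le_trans h1 _.
    have -> : K = xi ^+ N.+1 * N.+1%:R * (N.+1`!)%:R by rewrite /K natrM; ring.
    by apply: ler_peMr => //; rewrite mulr_ge0 // ?exprn_ge0 ?ltW.
  apply: le_lt_trans _ hK; rewrite [eps * K]mulrC; exact: ler_wpM2r.
have cdA j : count (dk (lkf sA) j) (iota 0 N.+1) = Gs sA j by rewrite -sumA count_dk.
have cdB j : count (dk (lkf sB) j) (iota 0 N.+1) = Gs sB j by rewrite -sumB count_dk.
have dirAB j : (j <= N.+1)%N -> (Gs sB j <= Gs sA j)%N.
  move=> hj.
  have R1 := @rank_key _ _ (B ^+ j) (Ci *m (A ^+ j *m Cm)) (Dk R N (lkf sB) j).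
  have : (\rank (Dk R N (lkf sB) j) <= \rank (Ci *m (A ^+ j *m Cm)))%N.
    apply: R1; first by move=> y hy; rewrite powB Pk_iso.
      exact: Dk_idem.
    apply: (lt_helper (c := xi * j%:R * eps)) _ (small j hj) => y.
    rewrite (_ : _ - _ = Ci *m (A ^+ j *m Cm - Cm *m B ^+ j)); last first.
      by rewrite mulmxBr !mulmxA CiC mul1mx.
    rewrite -mulmxA; apply: le_trans (opnormP _ _) _.
    apply: le_trans (ler_wpM2r (vnorm_ge0 _) hCi) _.
    apply: le_trans (ler_wpM2l (ltW hxi) (EB j y)) _.
    by rewrite !mulrA.
  rewrite rank_Dk cdB => h.
  apply: leq_trans h _; apply: leq_trans (mxrankM_maxr _ _) _.
  apply: leq_trans (mxrankM_maxl _ _) _.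
  rewrite powA; apply: leq_trans; first exact: rank_Pk.
  by rewrite rank_Dk cdA.
have dirBA j : (j <= N.+1)%N -> (Gs sA j <= Gs sB j)%N.
  move=> hj.
  have R1 := @rank_key _ _ (A ^+ j) (Cm *m (B ^+ j *m Ci)) (Dk R N (lkf sA) j).
  have : (\rank (Dk R N (lkf sA) j) <= \rank (Cm *m (B ^+ j *m Ci)))%N.
    apply: R1; first by move=> y hy; rewrite powA Pk_iso.
      exact: Dk_idem.
    apply: (lt_helper (c := xi * j%:R * eps)) _ (small j hj) => y.
    rewrite (_ : _ - _ = - ((A ^+ j *m Cm - Cm *m B ^+ j) *m Ci)); last first.
      by rewrite mulmxBl opprB -(mulmxA (A ^+ j) Cm Ci) CCi mulmx1 mulmxA.
    rewrite mulNmx vnormN -mulmxA; apply: le_trans (EB j _) _.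
    apply: le_trans (ler_wpM2l _ (opnormP _ _)) _.
      by rewrite mulr_ge0 // ler0n.
    apply: le_trans (ler_wpM2l _ (ler_wpM2r (vnorm_ge0 _) hCi)) _.
      by rewrite mulr_ge0 // ler0n.
    rewrite le_eqVlt; apply/orP; left; apply/eqP; ring.
  rewrite rank_Dk cdA => h.
  apply: leq_trans h _; apply: leq_trans (mxrankM_maxr _ _) _.
  apply: leq_trans (mxrankM_maxl _ _) _.
  rewrite powB; apply: leq_trans; first exact: rank_Pk.
  by rewrite rank_Dk cdB.
have GE j : Gs sA j = Gs sB j.
  case: (leqP j N.+1) => hj.
    by apply/eqP; rewrite eqn_leq dirAB // dirBA.
  by rewrite !Gs_big // ?sumA ?sumB // ltnW.
have := count_from_G sA k0; have := count_from_G sB k0; rewrite !GE; lia.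
Qed.
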